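(* Let $n\ge3$ and let $\mathbf M_n$ be the lattice with elements $0,a_1,\dots,a_n,1$, where $0<a_i<1$ for all $i$ and the $a_i$ are pairwise incomparable. Let $\pi$ be a permutation of $\{a_1,\dots,a_n\}$ with $\pi(a_i)\ne a_i$ for all $i$, and define $0':=1$, $1':=0$, $a_i':=\pi(a_i)$. Then $(M_n,\vee,\wedge,{}',0,1)$ is a finite subdirectly irreducible member of $\mathcal V$. Consequently $\mathcal V$ has infinitely many pairwise non-isomorphic finite subdirectly irreducible members.
   Context: $\mathcal V$ is the variety of algebras $(L,\vee,\wedge,{}',0,1)$ that are bounded lattices with a complementation $'$ (i.e. $x\vee x'\approx1$, $x\wedge x'\approx0$) satisfying the identities $x\vee y'\approx y'\vee\big((x\vee y')\wedge y\big)$ and $x\wedge y\approx x\wedge\big((x\wedge y)\vee x'\big)$. *)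

(* Defs.v *)
From Stdlib Require List.
From mathcomp Require Import all_boot all_fingroup.
Set Implicit Arguments. Unset Strict Implicit. Unset Printing Implicit Defensive.

Record ocl_alg := OclAlg {
  carrier :> Type;
  ajoin : carrier -> carrier -> carrier;
  ameet : carrier -> carrier -> carrier;
  acompl : carrier -> carrier;
  azero : carrier;
  aone : carrier }.

Definition in_V (A : ocl_alg) : Prop :=
  let j := @ajoin A in let m := @ameet A in let c := @acompl A in
  let o := @azero A in let t := @aone A in
  (forall x y z, j x (j y z) = j (j x y) z) /\
  (forall x y z, m x (m y z) = m (m x y) z) /\
  (forall x y, j x y = j y x) /\
  (forall x y, m x y = m y x) /\
  (forall x y, j x (m x y) = x) /\
  (forall x y, m x (j x y) = x) /\
  (forall x, j x o = x) /\
  (forall x, m x t = x) /\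
  (forall x, j x (c x) = t) /\
  (forall x, m x (c x) = o) /\
  (forall x y, j x (c y) = j (c y) (m (j x (c y)) y)) /\
  (forall x y, m x y = m x (j (m x y) (c x))).

Definition finite_alg (A : ocl_alg) : Prop :=
  exists s : list A, forall x : A, List.In x s.

Definition is_congruence (A : ocl_alg) (R : A -> A -> Prop) : Prop :=
  (forall x, R x x) /\ (forall x y, R x y -> R y x) /\
  (forall x y z, R x y -> R y z -> R x z) /\
  (forall x1 x2 y1 y2, R x1 x2 -> R y1 y2 -> R (@ajoin A x1 y1) (@ajoin A x2 y2)) /\
  (forall x1 x2 y1 y2, R x1 x2 -> R y1 y2 -> R (@ameet A x1 y1) (@ameet A x2 y2)) /\
  (forall x1 x2, R x1 x2 -> R (@acompl A x1) (@acompl A x2)).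

Definition nontrivial_rel (A : ocl_alg) (R : A -> A -> Prop) : Prop :=
  exists x y, R x y /\ x <> y.

Definition subdirectly_irreducible (A : ocl_alg) : Prop :=
  (exists x y : A, x <> y) /\
  exists mu : A -> A -> Prop,
    is_congruence mu /\ nontrivial_rel mu /\
    forall th : A -> A -> Prop, is_congruence th -> nontrivial_rel th ->
      forall x y, mu x y -> th x y.

Definition isomorphic (A B : ocl_alg) : Prop :=
  exists (f : A -> B) (g : B -> A),
    cancel f g /\ cancel g f /\
    (forall x y, f (@ajoin A x y) = @ajoin B (f x) (f y)) /\
    (forall x y, f (@ameet A x y) = @ameet B (f x) (f y)) /\
    (forall x, f (@acompl A x) = @acompl B (f x)) /\
    f (@azero A) = @azero B /\ f (@aone A) = @aone B.

(* The lattice M_n: None = 0, Some None = 1, Some (Some i) = a_i. *)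
Definition Mn_car (n : nat) := option (option 'I_n).

Definition Mn_join n (x y : Mn_car n) : Mn_car n :=
  if x == None then y else if y == None then x
  else if x == y then x else Some None.

Definition Mn_meet n (x y : Mn_car n) : Mn_car n :=
  if x == Some None then y else if y == Some None then x
  else if x == y then x else None.

Definition Mn_compl n (p : {perm 'I_n}) (x : Mn_car n) : Mn_car n :=
  match x with
  | None => Some None
  | Some None => None
  | Some (Some i) => Some (Some (p i))
  end.

Definition Mn_alg n (p : {perm 'I_n}) : ocl_alg :=
  @OclAlg (Mn_car n) (@Mn_join n) (@Mn_meet n) (Mn_compl p) None (Some None).

(* Main.v *)
Require Import Defs.
From mathcomp Require Import all_boot all_fingroup.
Lemma eqSS n (i j : 'I_n) : (Some (Some i) == Some (Some j) :> Mn_car n) = (i == j).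
Proof. by apply/eqP/eqP => [[]|->]. Qed.

Ltac crush hp hp' :=
  repeat (rewrite /Mn_join /Mn_meet /= ?eqSS ?(inj_eq perm_inj) ?hp ?hp' ?eqxx //=;
          try (match goal with |- context[?a == ?b] => let T := type of a in match T with ordinal _ => case: (eqVneq a b) => [?|?]; subst end end));
  try (match goal with H : is_true (?a != ?a) |- _ => by rewrite eqxx in H end).

Lemma inV n (p : {perm 'I_n}) : (forall i : 'I_n, p i != i) -> in_V (Mn_alg p).
Proof.
move=> hp0.
have hp : forall i, (p i == i) = false by move=> i; apply/negbTE.
have hp' : forall i, (i == p i) = false by move=> i; rewrite eq_sym hp.
rewrite /in_V /=.
split; [move=> [[x|]|] [[y|]|] [[z|]|]; crush hp hp'|].
split; [move=> [[x|]|] [[y|]|] [[z|]|]; crush hp hp'|].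
split; [move=> [[x|]|] [[y|]|]; crush hp hp'|].
split; [move=> [[x|]|] [[y|]|]; crush hp hp'|].
split; [move=> [[x|]|] [[y|]|]; crush hp hp'|].
split; [move=> [[x|]|] [[y|]|]; crush hp hp'|].
split; [move=> [[x|]|]; crush hp hp'|].
split; [move=> [[x|]|]; crush hp hp'|].
split; [move=> [[x|]|]; crush hp hp'|].
split; [move=> [[x|]|]; crush hp hp'|].
split; [move=> [[x|]|] [[y|]|]; crush hp hp'|].
move=> [[x|]|] [[y|]|]; crush hp hp'.
Qed.

Definition aa {n} (i : 'I_n) : Mn_car n := Some (Some i).

Lemma other {n} (i j : 'I_n) : 3 <= n -> exists k : 'I_n, k != i /\ k != j.
Proof.
move=> hn.
have h0 : 0 < n by apply: leq_trans hn.
have h1 : 1 < n by apply: leq_trans hn.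
case: (boolP ((nat_of_ord i != 0) && (nat_of_ord j != 0))) => [/andP[a b]|h].
  by exists (Ordinal h0); split; apply/eqP => /(congr1 val) /= e; rewrite -e eqxx in a b.
case: (boolP ((nat_of_ord i != 1) && (nat_of_ord j != 1))) => [/andP[a b]|h'].
  by exists (Ordinal h1); split; apply/eqP => /(congr1 val) /= e; rewrite -e eqxx in a b.
exists (Ordinal hn); split; apply/eqP => /(congr1 val) /= e;
  move: h h'; rewrite -e /=; by case: (nat_of_ord i) (nat_of_ord j) => [|[|[|?]]] [|[|[|?]]].
Qed.

Lemma si n (p : {perm 'I_n}) : 3 <= n -> subdirectly_irreducible (Mn_alg p).
Proof.
move=> hn.
have h0 : 0 < n by apply: leq_trans hn.
split; first by exists None, (Some None).
exists (fun _ _ => True); split.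
  by do !split.
split; first by exists None, (Some None).
move=> th [refl [sym [trans [cj [cm cc]]]]] [x [y [hxy hne]]] u v _.
have K0 : forall i : 'I_n, th None (aa i) -> th None (Some None).
  move=> i h.
  have [j [ji _]] := other i i hn.
  have [k [ki kj]] := other i j hn.
  have h1 : th (aa k) (Some None).
    have := cj _ _ _ _ h (refl (aa k)).
    by rewrite /= /Mn_join /= eqSS eq_sym (negbTE ki).
  have h2 : th None (aa j).
    have := cm _ _ _ _ h1 (refl (aa j)).
    by rewrite /= /Mn_meet /= eqSS (negbTE kj).
  have h3 : th (aa j) (Some None).
    have := cj _ _ _ _ h (refl (aa j)).
    by rewrite /= /Mn_join /= eqSS eq_sym (negbTE ji).
  exact: trans h2 h3.
have H01 : th None (Some None).
  move: x y hxy hne => [[i|]|] [[j|]|] hxy hne //.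
  - case: (eqVneq i j) => [e|ij]; first by subst.
    apply: (K0 i); apply: sym.
    have := cm _ _ _ _ hxy (refl (aa i)).
    by rewrite /= /Mn_meet /= !eqSS eqxx eq_sym (negbTE ij).
  - have [j [ji _]] := other i i hn.
    apply: (K0 j).
    have := cm _ _ _ _ hxy (refl (aa j)).
    by rewrite /= /Mn_meet /= !eqSS eq_sym (negbTE ji).
  - by apply: (K0 i); apply: sym.
  - have [k [kj _]] := other j j hn.
    apply: (K0 k).
    have := cm _ _ _ _ (sym _ _ hxy) (refl (aa k)).
    by rewrite /= /Mn_meet /= !eqSS eq_sym (negbTE kj).
  - by apply: sym.
  - by apply: (K0 j).
have Hx1 : forall z : Mn_car n, th z (Some None).
  move=> z; have := cj _ _ _ _ (refl z) H01.
  by case: z => [[i|]|].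
exact: trans (Hx1 u) (sym _ _ (Hx1 v)).
Qed.

Lemma fin n (p : {perm 'I_n}) : finite_alg (Mn_alg p).
Proof.
exists (enum {: option (option (ordinal n))}) => x.
have : x \in enum {: option (option (ordinal n))} by rewrite mem_enum.
elim: (enum {: option (option (ordinal n))}) => //= a s IH; rewrite in_cons => /orP[/eqP ->|/IH]; by [left|right].
Qed.

Lemma ordS_nfix n (i : 'I_n.+3) : ordS i != i.
Proof.
apply/eqP => /(congr1 val) /=.
have := ltn_ord i; rewrite leq_eqVlt => /orP[/eqP e|lt].
  by rewrite e modnn => h; move: e; rewrite -h.
by rewrite modn_small // => /eqP; rewrite (gtn_eqF (ltnSn _)).
Qed.

Definition cyc k : {perm 'I_k.+3} := perm (@ordS_inj k.+3).

Theorem mainTheorem10 :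
  (forall (n : nat) (p : {perm 'I_n}),
      3 <= n -> (forall i : 'I_n, p i != i) ->
      finite_alg (Mn_alg p) /\ in_V (Mn_alg p) /\
      subdirectly_irreducible (Mn_alg p)) /\
  (exists F : nat -> ocl_alg,
      (forall k, finite_alg (F k) /\ in_V (F k) /\
                 subdirectly_irreducible (F k)) /\
      (forall k l, k <> l -> ~ isomorphic (F k) (F l))).
Proof.
have part1 : forall (n : nat) (p : {perm 'I_n}),
      3 <= n -> (forall i : 'I_n, p i != i) ->
      finite_alg (Mn_alg p) /\ in_V (Mn_alg p) /\
      subdirectly_irreducible (Mn_alg p).
  by move=> n p hn hp; split; [exact: fin|split; [exact: inV|exact: si]].
split=> //.
exists (fun k => Mn_alg (cyc k)); split.
  move=> k; apply: part1 => // i; rewrite permE; exact: ordS_nfix.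
move=> k l hkl [f [g [fg [gf _]]]].
have := @bij_eq_card (option (option 'I_k.+3)) (option (option 'I_l.+3)) f
  (Bijective fg gf).
rewrite !card_option !card_ord => -[e]; exact: hkl.
Qed.
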